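(* Let $\mathbb K$ be an algebraically closed field, let $n\ge 1$ and $\mu\ge 0$ be integers with $\mu<\lfloor n/2\rfloor$, and let $(a,b,c)\in\mathcal P^\mu_n$. Let $\epsilon$ be a new variable. Then there exists $(a_\epsilon,b_\epsilon,c_\epsilon)\in\mathbb K[\epsilon,t]^3$ such that, regarded as univariate polynomials in $t$ over $\mathbb K(\epsilon)$, the following hold: (i) $\gcd(a_\epsilon,b_\epsilon,c_\epsilon)=1$; (ii) $\max\{\deg_t a_\epsilon,\deg_t b_\epsilon,\deg_t c_\epsilon\}=n$; (iii) $\mu(a_\epsilon,b_\epsilon,c_\epsilon)=\mu(a,b,c)+1$ (the class being computed over the field $\mathbb K(\epsilon)$); (iv) $(a_\epsilon,b_\epsilon,c_\epsilon)|_{\epsilon=0}=(a,b,c)$.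
   Context: For a field $F$ and $a,b,c\in F[t]$, the syzygy module is $\mathrm{Syz}(a,b,c)=\{(A,B,C)\in F[t]^3: Aa+Bb+Cc=0\}$. The degree of a vector $(A,B,C)$ is $\deg(A,B,C)=\max\{\deg A,\deg B,\deg C\}$. The class of $(a,b,c)$ is $\mu(a,b,c)=\min\{\deg(A,B,C): (A,B,C)\in \mathrm{Syz}(a,b,c)\setminus\{0\}\}$. $\mathbb K[t]_n$ denotes polynomials of degree $\le n$; $\mathcal P_n\subset \mathbb K[t]_n^3$ is the set of triples $(a,b,c)$ with $c\neq 0$, $\gcd(a,b,c)=1$ and $\max\{\deg a,\deg b,\deg c\}=n$; and $\mathcal P^\mu_n=\{(a,b,c)\in\mathcal P_n:\mu(a,b,c)=\mu\}$. *)

(* Defs.v *)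
From HB Require Import structures.
From mathcomp Require Import all_boot all_order all_algebra fraction.
Set Implicit Arguments. Unset Strict Implicit. Unset Printing Implicit Defensive.
Import GRing.Theory.
Local Open Scope ring_scope.

(* degree of a vector (A,B,C) : max of the degrees; for nonzero vectors this is
   (max of sizes) - 1 since size = degree + 1. *)
Definition deg3 (F : fieldType) (A B C : {poly F}) : nat :=
  (maxn (size A) (maxn (size B) (size C))).-1.

Definition syz (F : fieldType) (a b c A B C : {poly F}) : Prop :=
  A * a + B * b + C * c = 0.

(* is_class a b c m  <->  mu(a,b,c) = m : the minimum degree of a nonzero syzygy. *)
Definition is_class (F : fieldType) (a b c : {poly F}) (m : nat) : Prop :=
  (exists A B C : {poly F},
      syz a b c A B C /\ (A, B, C) != (0, 0, 0) /\ deg3 A B C = m) /\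
  (forall A B C : {poly F},
      syz a b c A B C -> (A, B, C) != (0, 0, 0) -> (m <= deg3 A B C)%N).

Definition gcd3_one (F : fieldType) (a b c : {poly F}) : Prop :=
  gcdp (gcdp a b) c %= 1.

Definition inP (F : fieldType) (n mu : nat) (a b c : {poly F}) : Prop :=
  [/\ c != 0, gcd3_one a b c, deg3 a b c = n & is_class a b c mu].

(* K[eps,t] = {poly {poly K}} (outer variable t, coefficients in K[eps]);
   regarded over K(eps) = {fraction {poly K}}. *)
Definition over_frac (K : fieldType) (p : {poly {poly K}}) :
  {poly {fraction {poly K}}} := map_poly (@tofrac _) p.

Definition at_eps0 (K : fieldType) (p : {poly {poly K}}) : {poly K} :=
  map_poly (fun q : {poly K} => q.[0]) p.

(* Main.v *)
Require Import Defs.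
From HB Require Import structures.
From mathcomp Require Import all_boot all_order all_algebra fraction.
From mathcomp Require Import zify ring.
Set Implicit Arguments. Unset Strict Implicit. Unset Printing Implicit Defensive.
Local Open Scope ring_scope.
Import GRing.Theory.

Lemma deg3_le (F : fieldType) (A B C : {poly F}) d :
  (deg3 A B C <= d)%N = [&& (size A <= d.+1)%N, (size B <= d.+1)%N & (size C <= d.+1)%N].
Proof.
rewrite /deg3; apply/idP/idP.
  move=> h; apply/and3P; split; lia.
by case/and3P=> h1 h2 h3; lia.
Qed.

Lemma size_le_deg3 (F : fieldType) (A B C : {poly F}) :
  [/\ (size A <= (deg3 A B C).+1)%N, (size B <= (deg3 A B C).+1)%N
    & (size C <= (deg3 A B C).+1)%N].
Proof. by move: (leqnn (deg3 A B C)); rewrite deg3_le => /and3P[]. Qed.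

Lemma deg3_ge (F : fieldType) (A B C : {poly F}) d :
  (d.+1 <= size A)%N || (d.+1 <= size B)%N || (d.+1 <= size C)%N -> (d <= deg3 A B C)%N.
Proof. rewrite /deg3 => h; lia. Qed.

Lemma size_mul_ge (F : fieldType) (l x : {poly F}) : l != 0 -> (size x <= size (l * x)%R)%N.
Proof.
move=> l0; have [->|x0] := eqVneq x 0; first by rewrite mulr0.
rewrite size_mul //; have : (0 < size l)%N by rewrite size_poly_gt0.
move: (size l) (size x) => u v; lia.
Qed.

Lemma bezout3 (F : fieldType) (a b c : {poly F}) : gcd3_one a b c ->
  exists X1 X2 X3, X1 * a + X2 * b + X3 * c = 1.
Proof.
rewrite /gcd3_one -size_poly_eq1 => h.
have: coprimep (gcdp a b) c by rewrite /coprimep.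
case/Bezout_eq1_coprimepP=> [[u1 u2]] /= e.
have [[w1 w2]] := Bezoutp a b; case/eqpP=> [[c1 c2]] /andP /= [c1n0 c2n0] e2.
have eg : gcdp a b = (c2^-1 * c1) *: (w1 * a + w2 * b).
  by rewrite -scalerA e2 scalerA mulVf // scale1r.
exists (u1 * ((c2^-1 * c1)%:P * w1)), (u1 * ((c2^-1 * c1)%:P * w2)), u2.
rewrite -e eg -mul_polyC; ring.
Qed.

Definition cx (R : comNzRingType) (S2 S3 T2 T3 : {poly R}) := S2 * T3 - S3 * T2.

Lemma size_cx (F : fieldType) (S2 S3 T2 T3 : {poly F}) s t :
  (size S2 <= s)%N -> (size S3 <= s)%N -> (size T2 <= t)%N -> (size T3 <= t)%N ->
  (size (cx S2 S3 T2 T3) <= (s + t).-1)%N.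
Proof.
move=> h1 h2 h3 h4; rewrite /cx.
apply: (leq_trans (size_polyD _ _)); rewrite size_polyN geq_max.
apply/andP; split; apply: (leq_trans (size_polyMleq _ _)).
  by move: h1 h4; move: (size S2) (size T3) => *; lia.
by move: h2 h3; move: (size S3) (size T2) => *; lia.
Qed.

Lemma deg3_cross (F : fieldType) (S1 S2 S3 T1 T2 T3 : {poly F}) :
  (deg3 (cx S2 S3 T2 T3) (cx S3 S1 T3 T1) (cx S1 S2 T1 T2)
    <= deg3 S1 S2 S3 + deg3 T1 T2 T3)%N.
Proof.
have [s1 s2 s3] := size_le_deg3 S1 S2 S3.
have [t1 t2 t3] := size_le_deg3 T1 T2 T3.
move: s1 s2 s3 t1 t2 t3; set s := deg3 S1 S2 S3; set t := deg3 T1 T2 T3 => s1 s2 s3 t1 t2 t3.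
rewrite deg3_le; apply/and3P; split; apply: leq_trans (size_cx (s:=s.+1) (t:=t.+1) _ _ _ _) _ => //;
  by rewrite addSn addnS.
Qed.

Lemma L1 (F : fieldType) (a b c S1 S2 S3 T1 T2 T3 : {poly F}) :
  gcd3_one a b c -> syz a b c S1 S2 S3 -> syz a b c T1 T2 T3 ->
  (cx S2 S3 T2 T3, cx S3 S1 T3 T1, cx S1 S2 T1 T2) != (0, 0, 0) ->
  (deg3 a b c <= deg3 (cx S2 S3 T2 T3) (cx S3 S1 T3 T1) (cx S1 S2 T1 T2))%N.
Proof.
move=> /bezout3 [X1 [X2 [X3 hX]]]; rewrite /syz => hS hT hW.
set W1 := cx S2 S3 T2 T3; set W2 := cx S3 S1 T3 T1; set W3 := cx S1 S2 T1 T2.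
set l := X1 * W1 + X2 * W2 + X3 * W3.
set sg := S1 * a + S2 * b + S3 * c.
set ta := T1 * a + T2 * b + T3 * c.
have e1 : W1 - l * a = W1 * (1 - (X1 * a + X2 * b + X3 * c)) + X2 * (T3 * sg - S3 * ta) - X3 * (T2 * sg - S2 * ta).
  by rewrite /l /W1 /W2 /W3 /sg /ta /cx; ring.
have e2 : W2 - l * b = W2 * (1 - (X1 * a + X2 * b + X3 * c)) + X3 * (T1 * sg - S1 * ta) - X1 * (T3 * sg - S3 * ta).
  by rewrite /l /W1 /W2 /W3 /sg /ta /cx; ring.
have e3 : W3 - l * c = W3 * (1 - (X1 * a + X2 * b + X3 * c)) + X1 * (T2 * sg - S2 * ta) - X2 * (T1 * sg - S1 * ta).
  by rewrite /l /W1 /W2 /W3 /sg /ta /cx; ring.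
have hw1 : W1 = l * a by apply/eqP; rewrite -subr_eq0 e1 hX /sg /ta hS hT; apply/eqP; ring.
have hw2 : W2 = l * b by apply/eqP; rewrite -subr_eq0 e2 hX /sg /ta hS hT; apply/eqP; ring.
have hw3 : W3 = l * c by apply/eqP; rewrite -subr_eq0 e3 hX /sg /ta hS hT; apply/eqP; ring.
have l0 : l != 0.
  by apply: contraNneq hW => hl; rewrite -/W1 -/W2 -/W3 hw1 hw2 hw3 hl !mul0r.
rewrite hw1 hw2 hw3 /deg3.
have := size_mul_ge a l0; have := size_mul_ge b l0; have := size_mul_ge c l0.
move: (size a) (size b) (size c) (size (l * a)) (size (l * b)) (size (l * c)).
move=> *; lia.
Qed.

Lemma canc (F : fieldType) (s z : {poly F}) : s != 0 -> s * z = 0 -> z = 0.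
Proof. by move=> /negPf h /eqP; rewrite mulf_eq0 h /= => /eqP. Qed.

Lemma par (F : fieldType) (S1 S2 S3 p1 p2 p3 q1 q2 q3 : {poly F}) :
  (S1, S2, S3) != (0, 0, 0) ->
  (cx S2 S3 p2 p3, cx S3 S1 p3 p1, cx S1 S2 p1 p2) = (0, 0, 0) ->
  (cx S2 S3 q2 q3, cx S3 S1 q3 q1, cx S1 S2 q1 q2) = (0, 0, 0) ->
  (cx p2 p3 q2 q3, cx p3 p1 q3 q1, cx p1 p2 q1 q2) = (0, 0, 0).
Proof.
move=> hS [hA1 hA2 hA3] [hB1 hB2 hB3].
have [s1|s1] := eqVneq S1 0; last first.
  congr (_, _, _); apply: (canc s1).
  - by transitivity (p1 * cx S2 S3 q2 q3 + cx S1 S2 p1 p2 * q3 + cx S3 S1 p3 p1 * q2);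
      [rewrite /cx; ring | rewrite hB1 hA3 hA2; ring].
  - by transitivity (p1 * cx S3 S1 q3 q1 - cx S3 S1 p3 p1 * q1);
      [rewrite /cx; ring | rewrite hB2 hA2; ring].
  - by transitivity (p1 * cx S1 S2 q1 q2 - cx S1 S2 p1 p2 * q1);
      [rewrite /cx; ring | rewrite hB3 hA3; ring].
have [s2|s2] := eqVneq S2 0; last first.
  congr (_, _, _); apply: (canc s2).
  - by transitivity (p2 * cx S2 S3 q2 q3 - cx S2 S3 p2 p3 * q2);
      [rewrite /cx; ring | rewrite hB1 hA1; ring].
  - by transitivity (p2 * cx S3 S1 q3 q1 + cx S2 S3 p2 p3 * q1 + cx S1 S2 p1 p2 * q3);
      [rewrite /cx; ring | rewrite hB2 hA1 hA3; ring].
  - by transitivity (p2 * cx S1 S2 q1 q2 - cx S1 S2 p1 p2 * q2);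
      [rewrite /cx; ring | rewrite hB3 hA3; ring].
have [s3|s3] := eqVneq S3 0; last first.
  congr (_, _, _); apply: (canc s3).
  - by transitivity (p3 * cx S2 S3 q2 q3 - cx S2 S3 p2 p3 * q3);
      [rewrite /cx; ring | rewrite hB1 hA1; ring].
  - by transitivity (p3 * cx S3 S1 q3 q1 - cx S3 S1 p3 p1 * q3);
      [rewrite /cx; ring | rewrite hB2 hA2; ring].
  - by transitivity (p3 * cx S1 S2 q1 q2 + cx S3 S1 p3 p1 * q2 + cx S2 S3 p2 p3 * q1);
      [rewrite /cx; ring | rewrite hB3 hA2 hA1; ring].
by move: hS; rewrite s1 s2 s3 eqxx.
Qed.

Lemma size_top0 (F : fieldType) (r : {poly F}) m :
  (size r <= m.+1)%N -> r`_m = 0 -> (size r <= m)%N.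
Proof.
move=> h1 h2; rewrite leq_eqVlt in h1; case/orP: h1 => [/eqP e|]; last by [].
have : lead_coef r = 0 by rewrite lead_coefE e.
by move/eqP; rewrite lead_coef_eq0 => /eqP ->; rewrite size_poly0.
Qed.

Lemma prim (F : fieldType) (a b c p1 p2 p3 : {poly F}) mu :
  syz a b c p1 p2 p3 -> (p1, p2, p3) != (0, 0, 0) -> deg3 p1 p2 p3 = mu ->
  (forall A B C, syz a b c A B C -> (A, B, C) != (0, 0, 0) -> (mu <= deg3 A B C)%N) ->
  gcd3_one p1 p2 p3.
Proof.
move=> hs hn hd hmin; rewrite /gcd3_one -size_poly_eq1.
set g := gcdp (gcdp p1 p2) p3.
have g1 : g %| p1 by apply: dvdp_trans (dvdp_gcdl _ _) (dvdp_gcdl _ _).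
have g2 : g %| p2 by apply: dvdp_trans (dvdp_gcdl _ _) (dvdp_gcdr _ _).
have g3 : g %| p3 by apply: dvdp_gcdr.
have g0 : g != 0.
  apply: contraNneq hn => /eqP; rewrite /g gcdp_eq0 gcdp_eq0 => /andP[/andP[]].
  by move=> /eqP -> /eqP -> /eqP ->.
apply/negPn/negP => hg.
have sg : (1 < size g)%N.
  have : (0 < size g)%N by rewrite size_poly_gt0.
  by move: hg; move: (size g) => *; lia.
have e1 := divpK g1; have e2 := divpK g2; have e3 := divpK g3.
set q1 := p1 %/ g in e1; set q2 := p2 %/ g in e2; set q3 := p3 %/ g in e3.
have hsq : syz a b c q1 q2 q3.
  rewrite /syz; apply: (canc g0); move: hs; rewrite /syz -e1 -e2 -e3 => <-; ring.
have hqn : (q1, q2, q3) != (0, 0, 0).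
  apply: contraNneq hn => -[z1 z2 z3]; by rewrite -e1 -e2 -e3 z1 z2 z3 !mul0r.
have := hmin _ _ _ hsq hqn.
have hsz : forall q p : {poly F}, q * g = p -> (size q <= (size p).-1)%N.
  move=> q p <-; have [->|q0] := eqVneq q 0; first by rewrite size_poly0.
  rewrite size_mul //; move: sg; move: (size q) (size g) => *; lia.
have z1 := hsz _ _ e1; have z2 := hsz _ _ e2; have z3 := hsz _ _ e3.
have : (0 < size q1)%N || (0 < size q2)%N || (0 < size q3)%N.
  rewrite !size_poly_gt0; move: hqn; apply: contraR.
  by rewrite !negb_or !negbK => /andP[/andP[/eqP -> /eqP ->] /eqP ->].
move: hd; rewrite /deg3 => <-.
move: z1 z2 z3; move: (size q1) (size q2) (size q3) (size p1) (size p2) (size p3) => *; lia.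
Qed.

Lemma red1 (F : fieldType) (a b c p1 p2 p3 q1 q2 q3 : {poly F}) (n mu : nat) :
  size p1 = mu.+1 -> (size p2 <= mu.+1)%N -> (size p3 <= mu.+1)%N ->
  (mu.*2 <= n)%N -> (size b <= n.+1)%N -> (size c <= n.+1)%N ->
  a = cx p2 p3 q2 q3 -> b = cx p3 p1 q3 q1 -> c = cx p1 p2 q1 q2 ->
  exists r1 r2 r3 : {poly F}, [/\ a = cx p2 p3 r2 r3, b = cx p3 p1 r3 r1, c = cx p1 p2 r1 r2
    & [/\ (size r1 <= (n - mu).+1)%N, (size r2 <= (n - mu).+1)%N & (size r3 <= (n - mu).+1)%N]].
Proof.
move=> sp1 sp2 sp3 hn sb sc ea eb ec.
have p10 : p1 != 0 by rewrite -size_poly_gt0 sp1.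
set h := q1 %/ p1.
exists (q1 - h * p1), (q2 - h * p2), (q3 - h * p3).
have er1 : q1 - h * p1 = q1 %% p1 by rewrite {1}(divp_eq q1 p1) /h; ring.
have sr1 : (size (q1 - h * p1)%R < mu.+1)%N by rewrite er1 -sp1 ltn_modp.
have key : forall (x r s : {poly F}), (size x <= n.+1)%N -> x = p1 * r - s ->
    (size s <= mu.*2)%N -> (size r <= (n - mu).+1)%N.
  move=> x r s sx ex ss.
  have [->|r0] := eqVneq r 0; first by rewrite size_poly0.
  have spr : size (p1 * r) = (mu.+1 + size r).-1 by rewrite size_mul // sp1.
  have : (size (p1 * r)%R <= n.+1)%N.
    case: (ltnP (size s) (size (p1 * r)%R)) => hs.
      by rewrite -(size_polyN s) in hs; rewrite -(size_addl hs) -ex.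
    by apply: leq_trans hs _; move: ss; move: (size s) => *; lia.
  by rewrite spr; move: hn; move: (size r) => *; lia.
split.
- by rewrite ea /cx; ring.
- by rewrite eb /cx; ring.
- by rewrite ec /cx; ring.
split.
- by apply: ltnW; apply: leq_trans sr1 _; lia.
- apply: (key c _ (p2 * (q1 - h * p1))) => //; first by rewrite ec /cx; ring.
  apply: leq_trans (size_polyMleq _ _) _; move: sp2 sr1; move: (size p2) (size (q1 - h * p1)%R) => *; lia.
- apply: (key (- b) _ (p3 * (q1 - h * p1))).
  + by rewrite size_polyN.
  + by rewrite eb /cx; ring.
  apply: leq_trans (size_polyMleq _ _) _; move: sp3 sr1; move: (size p3) (size (q1 - h * p1)%R) => *; lia.
Qed.

Lemma cross_ne0 (F : fieldType) (a b c x y z : {poly F}) :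
  c != 0 -> a = x -> b = y -> c = z -> (x, y, z) != (0, 0, 0).
Proof. by move=> c0 <- <- <-; apply: contraNneq c0 => -[_ _ ->]. Qed.

Lemma Lnz (F : fieldType) (a b c p1 p2 p3 r1 r2 r3 : {poly F}) (n mu : nat) :
  gcd3_one a b c -> deg3 a b c = n -> c != 0 -> (mu.*2.+2 <= n)%N ->
  syz a b c p1 p2 p3 -> (deg3 p1 p2 p3 <= mu)%N ->
  a = cx p2 p3 r2 r3 -> b = cx p3 p1 r3 r1 -> c = cx p1 p2 r1 r2 ->
  (deg3 r1 r2 r3 <= n - mu)%N ->
  (r1`_(n - mu))%:P * a + (r2`_(n - mu))%:P * b + (r3`_(n - mu))%:P * c != 0.
Proof.
move=> hg hd c0 hn hp dp ea eb ec dr.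
set k := (n - mu)%N.
have hr : syz a b c r1 r2 r3 by rewrite /syz ea eb ec /cx; ring.
have vnz := cross_ne0 c0 ea eb ec.
have hL1 := L1 hg hp hr vnz.
have dc := deg3_cross p1 p2 p3 r1 r2 r3.
rewrite hd in hL1.
apply/negP => /eqP hm.
have [L0|Ln0] := eqVneq (r1`_k, r2`_k, r3`_k) (0, 0, 0).
  case: L0 => z1 z2 z3.
  have hk : (n - mu - 1).+1 = k by rewrite /k; move: hn => *; lia.
  have : (deg3 r1 r2 r3 <= n - mu - 1)%N.
    have [s1 s2 s3] := size_le_deg3 r1 r2 r3.
    rewrite deg3_le hk; apply/and3P; split; apply: size_top0; rewrite ?z1 ?z2 ?z3 //;
      by move: dr s1 s2 s3; rewrite /k; move: (deg3 r1 r2 r3) (size r1) (size r2) (size r3) => *; lia.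
  by move: dp hL1 dc hn; move: (deg3 (cx p2 p3 r2 r3) (cx p3 p1 r3 r1) (cx p1 p2 r1 r2)) (deg3 p1 p2 p3) (deg3 r1 r2 r3) => *; lia.
set L1p := (r1`_k)%:P; set L2p := (r2`_k)%:P; set L3p := (r3`_k)%:P.
have hLs : syz a b c L1p L2p L3p by rewrite /syz hm.
have Lnz : (L1p, L2p, L3p) != (0, 0, 0).
  apply: contraNneq Ln0 => -[]; rewrite /L1p /L2p /L3p.
  by move=> /eqP; rewrite polyC_eq0 => /eqP -> /eqP; rewrite polyC_eq0 => /eqP -> /eqP; rewrite polyC_eq0 => /eqP ->.
have dL : (deg3 L1p L2p L3p <= 0)%N.
  by rewrite deg3_le !size_polyC_leq1.
have cLr : (cx L2p L3p r2 r3, cx L3p L1p r3 r1, cx L1p L2p r1 r2) = (0, 0, 0).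
  apply/eqP; apply/negP => /negP hne.
  have := L1 hg hLs hr hne; rewrite hd => h.
  have hk : (n - mu - 1).+1 = k by rewrite /k; move: hn => *; lia.
  have : (deg3 (cx L2p L3p r2 r3) (cx L3p L1p r3 r1) (cx L1p L2p r1 r2) <= n - mu - 1)%N.
    have [s1 s2 s3] := size_le_deg3 r1 r2 r3.
    rewrite deg3_le hk; apply/and3P; split; apply: size_top0.
    - apply: leq_trans (size_cx (s:=1) (t:=k.+1) _ _ _ _) _ => //; try exact: size_polyC_leq1;
        by move: dr s2 s3; rewrite /k; move: (deg3 r1 r2 r3) (size r2) (size r3) => *; lia.
    - by rewrite /cx coefB !coefCM mulrC subrr.
    - apply: leq_trans (size_cx (s:=1) (t:=k.+1) _ _ _ _) _ => //; try exact: size_polyC_leq1;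
        by move: dr s1 s3; rewrite /k; move: (deg3 r1 r2 r3) (size r1) (size r3) => *; lia.
    - by rewrite /cx coefB !coefCM mulrC subrr.
    - apply: leq_trans (size_cx (s:=1) (t:=k.+1) _ _ _ _) _ => //; try exact: size_polyC_leq1;
        by move: dr s1 s2; rewrite /k; move: (deg3 r1 r2 r3) (size r1) (size r2) => *; lia.
    - by rewrite /cx coefB !coefCM mulrC subrr.
  by move: h hn; move: (deg3 (cx L2p L3p r2 r3) (cx L3p L1p r3 r1) (cx L1p L2p r1 r2)) => *; lia.
have cLp : (cx L2p L3p p2 p3, cx L3p L1p p3 p1, cx L1p L2p p1 p2) = (0, 0, 0).
  apply/eqP; apply/negP => /negP hne.
  have := L1 hg hLs hp hne; rewrite hd => h.
  have := deg3_cross L1p L2p L3p p1 p2 p3.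
  by move: h hn dL dp; move: (deg3 (cx L2p L3p p2 p3) (cx L3p L1p p3 p1) (cx L1p L2p p1 p2))
     (deg3 L1p L2p L3p) (deg3 p1 p2 p3) => *; lia.
have := par Lnz cLp cLr.
by move/eqP: vnz.
Qed.

Lemma struct (F : fieldType) (n mu : nat) (a b c : {poly F}) :
  (mu.*2.+2 <= n)%N -> inP n mu a b c ->
  exists p1 p2 p3 r1 r2 r3 : {poly F},
  [/\ syz a b c p1 p2 p3, (deg3 p1 p2 p3 <= mu)%N,
      [/\ a = cx p2 p3 r2 r3, b = cx p3 p1 r3 r1 & c = cx p1 p2 r1 r2],
      (deg3 r1 r2 r3 <= n - mu)%N &
      (r1`_(n - mu))%:P * a + (r2`_(n - mu))%:P * b + (r3`_(n - mu))%:P * c != 0].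
Proof.
move=> hn [c0 hg hd [[p1 [p2 [p3 [hp [pn dp]]]]] hmin]].
have [x1 [x2 [x3 hx]]] := bezout3 (prim hp pn dp hmin).
set q1 := cx b c x2 x3; set q2 := cx c a x3 x1; set q3 := cx a b x1 x2.
have hp' := hp; rewrite /syz in hp'.
have ea : a = cx p2 p3 q2 q3.
  apply/eqP; rewrite eq_sym -subr_eq0; apply/eqP.
  transitivity (a * (x1 * p1 + x2 * p2 + x3 * p3 - 1) - x1 * (p1 * a + p2 * b + p3 * c)).
    by rewrite /q2 /q3 /cx; ring.
  by rewrite hx hp'; ring.
have eb : b = cx p3 p1 q3 q1.
  apply/eqP; rewrite eq_sym -subr_eq0; apply/eqP.
  transitivity (b * (x1 * p1 + x2 * p2 + x3 * p3 - 1) - x2 * (p1 * a + p2 * b + p3 * c)).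
    by rewrite /q1 /q3 /cx; ring.
  by rewrite hx hp'; ring.
have ec : c = cx p1 p2 q1 q2.
  apply/eqP; rewrite eq_sym -subr_eq0; apply/eqP.
  transitivity (c * (x1 * p1 + x2 * p2 + x3 * p3 - 1) - x3 * (p1 * a + p2 * b + p3 * c)).
    by rewrite /q1 /q2 /cx; ring.
  by rewrite hx hp'; ring.
have dp' : (deg3 p1 p2 p3 <= mu)%N by rewrite dp.
have [sa sb sc] := size_le_deg3 a b c; rewrite hd in sa sb sc.
have [sp1 sp2 sp3] := size_le_deg3 p1 p2 p3; rewrite dp in sp1 sp2 sp3.
have hn2 : (mu.*2 <= n)%N by move: hn => *; lia.
suff [r1 [r2 [r3 [e1 e2 e3 [z1 z2 z3]]]]] : exists r1 r2 r3 : {poly F},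
   [/\ a = cx p2 p3 r2 r3, b = cx p3 p1 r3 r1, c = cx p1 p2 r1 r2
    & [/\ (size r1 <= (n - mu).+1)%N, (size r2 <= (n - mu).+1)%N & (size r3 <= (n - mu).+1)%N]].
  have dr : (deg3 r1 r2 r3 <= n - mu)%N by rewrite deg3_le z1 z2 z3.
  exists p1, p2, p3, r1, r2, r3; split => //.
  exact: Lnz hg hd c0 hn hp dp' e1 e2 e3 dr.
have pos : (0 < size p1)%N || (0 < size p2)%N || (0 < size p3)%N.
  rewrite !size_poly_gt0; move: pn; apply: contraR.
  by rewrite !negb_or !negbK => /andP[/andP[/eqP -> /eqP ->] /eqP ->].
have : size p1 = mu.+1 \/ size p2 = mu.+1 \/ size p3 = mu.+1.
  move: pos sp1 sp2 sp3 dp; rewrite /deg3.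
  by move: (size p1) (size p2) (size p3) => *; lia.
case=> [s1|[s2|s3]].
- exact: red1 s1 sp2 sp3 hn2 sb sc ea eb ec.
- have [r2 [r3 [r1 [e2 e3 e1 [z2 z3 z1]]]]] := red1 s2 sp3 sp1 hn2 sc sa eb ec ea.
  by exists r1, r2, r3.
- have [r3 [r1 [r2 [e3 e1 e2 [z3 z1 z2]]]]] := red1 s3 sp1 sp2 hn2 sa sb ec ea eb.
  by exists r1, r2, r3.
Qed.


Lemma at0E (K : fieldType) (p : {poly {poly K}}) : at_eps0 p = map_poly (horner_eval 0) p.
Proof. by []. Qed.

Lemma at0_lift (K : fieldType) (p : {poly K}) : at_eps0 (p^:P) = p.
Proof.
rewrite at0E; apply: (map_polyK (f := horner_eval 0) (g := polyC)); last by rewrite /horner_eval horner0.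
by move=> x; rewrite /horner_eval hornerC.
Qed.

Lemma at0_e (K : fieldType) : at_eps0 (('X : {poly K})%:P) = 0.
Proof. by rewrite at0E map_polyC; congr (_%:P); exact: hornerX. Qed.

Lemma size_at0 (K : fieldType) (p : {poly {poly K}}) : (size (at_eps0 p) <= size p)%N.
Proof. by rewrite /at_eps0 /map_poly; apply: size_poly. Qed.

Lemma size_of (K : fieldType) (p : {poly {poly K}}) : size (over_frac p) = size p.
Proof.
rewrite /over_frac size_map_inj_poly //.
by move=> x y /eqP; rewrite tofrac_eq => /eqP.
Qed.

Lemma size_e (K : fieldType) (p : {poly {poly K}}) : size (('X : {poly K})%:P * p) = size p.
Proof. by rewrite size_Cmul // polyX_eq0. Qed.

Lemma root_ex (K : closedFieldType) (m : {poly K}) (G : {poly {fraction {poly K}}}) :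
  m != 0 -> G %| over_frac (m^:P) -> size G != 1%N -> exists z : K, root G (tofrac z%:P).
Proof.
move=> + + hG1; move: (leqnn (size m)); move: {2}(size m) => s.
elim: s m => [|s IH] m hs m0 hG.
  by move: hs; rewrite leqn0 size_poly_eq0 (negPf m0).
have psi0 : over_frac m^:P != 0 by rewrite -size_poly_gt0 size_of size_map_polyC size_poly_gt0.
have G0 : G != 0 by apply: contraNneq psi0 => G0; move: hG; rewrite G0 dvd0p.
have [/closed_rootP [z hz]|/negPn/eqP sm1] := boolP (size m != 1%N); last first.
  have := dvdp_leq psi0 hG; rewrite size_of size_map_polyC sm1.
  have : (0 < size G)%N by rewrite size_poly_gt0.
  by move: hG1; move: (size G) => *; lia.
case/factor_theorem: hz => m' em.
have m'0 : m' != 0 by apply: contraNneq m0 => e0; rewrite em e0 mul0r.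
have sm' : (size m' <= s)%N.
  move: hs; rewrite em size_mul ?polyXsubC_eq0 // size_XsubC.
  by move: (size m') => *; lia.
have ez : over_frac (('X - z%:P)^:P) = 'X - (tofrac z%:P)%:P.
  by rewrite /over_frac !rmorphB /= !map_polyX !map_polyC.
have [hr|hnr] := boolP (root G (tofrac z%:P)); first by exists z.
apply: (IH m' sm' m'0).
rewrite -(Gauss_dvdpl _ (q := 'X - (tofrac z%:P)%:P)); last by rewrite coprimep_XsubC.
by rewrite -ez /over_frac -!rmorphM /= -em.
Qed.

Lemma size_cxL (F : fieldType) (r2 r3 : {poly F}) k :
  (size r2 <= k.+1)%N -> (size r3 <= k.+1)%N ->
  (size (cx (r2`_k)%:P (r3`_k)%:P r2 r3) <= k)%N.
Proof.
move=> h2 h3; apply: size_top0; last by rewrite /cx coefB !coefCM mulrC subrr.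
apply: leq_trans (size_cx (s:=1) (t:=k.+1) _ _ _ _) _ => //; exact: size_polyC_leq1.
Qed.

Lemma of_cx (K : fieldType) (x y z w : {poly {poly K}}) :
  over_frac (cx x y z w) = cx (over_frac x) (over_frac y) (over_frac z) (over_frac w).
Proof. by rewrite /over_frac /cx rmorphB !rmorphM. Qed.

Lemma of_dot (K : fieldType) (x y z w s t : {poly {poly K}}) :
  over_frac (x * y + z * w + s * t) =
  over_frac x * over_frac y + over_frac z * over_frac w + over_frac s * over_frac t.
Proof. by rewrite /over_frac !rmorphD !rmorphM. Qed.

Lemma of_mul (K : fieldType) (x y : {poly {poly K}}) :
  over_frac (x * y) = over_frac x * over_frac y.
Proof. by rewrite /over_frac !rmorphM. Qed.

Lemma of_eq0 (K : fieldType) (x : {poly {poly K}}) : (over_frac x == 0) = (x == 0).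
Proof. by rewrite -!size_poly_eq0 size_of. Qed.

Lemma at0V (K : fieldType) (x w : {poly K}) :
  at_eps0 (x^:P + ('X : {poly K})%:P * w^:P) = x.
Proof.
apply/polyP => i; rewrite /at_eps0 coef_map_id0 ?horner0 // coefD coefCM !coef_map /=.
by rewrite hornerD hornerC hornerM hornerX mul0r addr0.
Qed.

Lemma rootV (K : fieldType) (x w : {poly K}) (z : K) :
  root (over_frac (x^:P + ('X : {poly K})%:P * w^:P)) (tofrac z%:P) -> root x z.
Proof.
rewrite /root /over_frac horner_map /= tofrac_eq0 => /eqP h.
apply/eqP; have := congr1 (fun p : {poly K} => p`_0) h.
rewrite hornerD hornerM hornerC !horner_map /= coefD coefC coef0 /=.
by rewrite coefMC coefX /= mul0r addr0.
Qed.

Unset Implicit Arguments.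

Theorem theorem1p2 (K : closedFieldType) (n mu : nat) (a b c : {poly K}) :
  (1 <= n)%N -> (mu < n./2)%N -> inP n mu a b c ->
  exists ae be ce : {poly {poly K}},
    [/\ gcd3_one (over_frac ae) (over_frac be) (over_frac ce),
        deg3 (over_frac ae) (over_frac be) (over_frac ce) = n,
        is_class (over_frac ae) (over_frac be) (over_frac ce) mu.+1 &
        (at_eps0 ae, at_eps0 be, at_eps0 ce) = (a, b, c)].
Proof.
move=> n1 hmu hin.
have hn : (mu.*2.+2 <= n)%N by move: hmu => *; lia.
have [c0 hg hd _] := hin.
have [p1 [p2 [p3 [r1 [r2 [r3 [hp dp [ea eb ec] dr hm]]]]]]] := struct hn hin.
set k := (n - mu)%N in dr hm.
set ll1 := r1`_k; set ll2 := r2`_k; set ll3 := r3`_k.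
set u1 : {poly K} := ll1%:P * 'X^(mu.+1).
set u2 : {poly K} := ll2%:P * 'X^(mu.+1).
set u3 : {poly K} := ll3%:P * 'X^(mu.+1).
set e : {poly {poly K}} := ('X : {poly K})%:P.
set P1 := p1^:P + e * u1^:P.
set P2 := p2^:P + e * u2^:P.
set P3 := p3^:P + e * u3^:P.
set V1 := cx P2 P3 r2^:P r3^:P.
set V2 := cx P3 P1 r3^:P r1^:P.
set V3 := cx P1 P2 r1^:P r2^:P.
set j := (n - mu.*2 - 1)%N.
set Q1 := e * r1^:P - 'X^j * P1.
set Q2 := e * r2^:P - 'X^j * P2.
set Q3 := e * r3^:P - 'X^j * P3.
exists V1, V2, V3.
set w1 := cx u2 u3 r2 r3; set w2 := cx u3 u1 r3 r1; set w3 := cx u1 u2 r1 r2.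
have eV1 : V1 = a^:P + e * w1^:P.
  by rewrite ea /V1 /P2 /P3 /w1 /cx !rmorphB !rmorphM /=; ring.
have eV2 : V2 = b^:P + e * w2^:P.
  by rewrite eb /V2 /P3 /P1 /w2 /cx !rmorphB !rmorphM /=; ring.
have eV3 : V3 = c^:P + e * w3^:P.
  by rewrite ec /V3 /P1 /P2 /w3 /cx !rmorphB !rmorphM /=; ring.

have [sa sb sc] := size_le_deg3 a b c; rewrite hd in sa sb sc.
have [sr1 sr2 sr3] := size_le_deg3 r1 r2 r3.
have {}sr1 : (size r1 <= k.+1)%N by move: dr sr1; move: (deg3 r1 r2 r3) (size r1) => *; lia.
have {}sr2 : (size r2 <= k.+1)%N by move: dr sr2; move: (deg3 r1 r2 r3) (size r2) => *; lia.
have {}sr3 : (size r3 <= k.+1)%N by move: dr sr3; move: (deg3 r1 r2 r3) (size r3) => *; lia.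
have [sp1 sp2 sp3] := size_le_deg3 p1 p2 p3.
have {}sp1 : (size p1 <= mu.+1)%N by move: dp sp1; move: (deg3 p1 p2 p3) (size p1) => *; lia.
have {}sp2 : (size p2 <= mu.+1)%N by move: dp sp2; move: (deg3 p1 p2 p3) (size p2) => *; lia.
have {}sp3 : (size p3 <= mu.+1)%N by move: dp sp3; move: (deg3 p1 p2 p3) (size p3) => *; lia.
have hkn : (mu.+1 + k = n.+1)%N by rewrite /k; move: hn => *; lia.
have sw : forall (x y : K) (r r' : {poly K}), (size r <= k.+1)%N -> (size r' <= k.+1)%N ->
    x = r`_k -> y = r'`_k ->
    (size (cx (x%:P * 'X^(mu.+1)) (y%:P * 'X^(mu.+1)) r r')%R <= n.+1)%N.
  move=> x y r r' hr hr' -> ->.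
  have -> : cx ((r`_k)%:P * 'X^(mu.+1)) ((r'`_k)%:P * 'X^(mu.+1)) r r' =
     'X^(mu.+1) * cx (r`_k)%:P (r'`_k)%:P r r' by rewrite /cx; ring.
  apply: leq_trans (size_polyMleq _ _) _; rewrite size_polyXn.
  have := size_cxL hr hr'; move: hkn.
  by move: (size (cx (r`_k)%:P (r'`_k)%:P r r')) => *; lia.
have sw1 : (size w1 <= n.+1)%N by apply: sw.
have sw2 : (size w2 <= n.+1)%N by apply: sw.
have sw3 : (size w3 <= n.+1)%N by apply: sw.
have sV : forall (x w : {poly K}), (size x <= n.+1)%N -> (size w <= n.+1)%N ->
    (size (x^:P + e * w^:P)%R <= n.+1)%N.
  move=> x w hx hw; apply: leq_trans (size_polyD _ _) _.
  by rewrite geq_max size_map_polyC size_e size_map_polyC hx hw.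
have sV1 := sV _ _ sa sw1; have sV2 := sV _ _ sb sw2; have sV3 := sV _ _ sc sw3.
rewrite -eV1 in sV1; rewrite -eV2 in sV2; rewrite -eV3 in sV3.
have sP : forall (x : K) (p : {poly K}), (size p <= mu.+1)%N ->
    (size (p^:P + e * (x%:P * 'X^(mu.+1))^:P)%R <= mu.+2)%N.
  move=> x p hp'; apply: leq_trans (size_polyD _ _) _.
  rewrite geq_max size_map_polyC size_e size_map_polyC; apply/andP; split.
    by apply: leq_trans hp' _.
  apply: leq_trans (size_polyMleq _ _) _; rewrite size_polyXn.
  have := size_polyC_leq1 x; by move: (size x%:P) => *; lia.
have sP1 : (size P1 <= mu.+2)%N by apply: sP.
have sP2 : (size P2 <= mu.+2)%N by apply: sP.
have sP3 : (size P3 <= mu.+2)%N by apply: sP.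
have eX : 'X^k = 'X^j * 'X^(mu.+1) :> {poly K}.
  by rewrite -exprD /j /k; congr (_ ^+ _); move: hn => *; lia.
have sQ : forall (x : K) (r p : {poly K}), (size r <= k.+1)%N -> (size p <= mu.+1)%N -> x = r`_k ->
    (size (e * r^:P - 'X^j * (p^:P + e * (x%:P * 'X^(mu.+1))^:P))%R <= k)%N.
  move=> x r p hr hp' ->.
  have -> : e * r^:P - 'X^j * (p^:P + e * ((r`_k)%:P * 'X^(mu.+1))^:P) =
      e * (r - (r`_k)%:P * 'X^k)^:P - ('X^j * p)^:P.
    by rewrite eX !rmorphB !rmorphM /= !map_polyXn; ring.
  apply: leq_trans (size_polyD _ _) _; rewrite size_polyN geq_max size_e !size_map_polyC.
  apply/andP; split.
    apply: size_top0; last by rewrite coefB coefCM coefXn eqxx mulr1 subrr.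
    apply: leq_trans (size_polyD _ _) _; rewrite size_polyN geq_max hr /=.
    apply: leq_trans (size_polyMleq _ _) _; rewrite size_polyXn.
    have := size_polyC_leq1 (r`_k); by move: (size (r`_k)%:P) => *; lia.
  apply: leq_trans (size_polyMleq _ _) _; rewrite size_polyXn /j.
  by move: hp' hkn hn; move: (size p) => *; lia.
have sQ1 : (size Q1 <= k)%N by apply: sQ.
have sQ2 : (size Q2 <= k)%N by apply: sQ.
have sQ3 : (size Q3 <= k)%N by apply: sQ.
have sPV : P1 * V1 + P2 * V2 + P3 * V3 = 0 by rewrite /V1 /V2 /V3 /cx; ring.
have sQV : Q1 * V1 + Q2 * V2 + Q3 * V3 = 0 by rewrite /Q1 /Q2 /Q3 /V1 /V2 /V3 /cx; ring.
have cPQ1 : cx P2 P3 Q2 Q3 = e * V1 by rewrite /Q1 /Q2 /Q3 /V1 /V2 /V3 /cx; ring.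
have cPQ2 : cx P3 P1 Q3 Q1 = e * V2 by rewrite /Q1 /Q2 /Q3 /V1 /V2 /V3 /cx; ring.
have cPQ3 : cx P1 P2 Q1 Q2 = e * V3 by rewrite /Q1 /Q2 /Q3 /V1 /V2 /V3 /cx; ring.
set mm := u1 * a + u2 * b + u3 * c.
have kp : p1^:P * V1 + p2^:P * V2 + p3^:P * V3 = - (e * mm^:P).
  rewrite /mm ea eb ec /V1 /V2 /V3 /P1 /P2 /P3 /cx !(rmorphD, rmorphB, rmorphM) /=; ring.
have mm0 : mm != 0.
  have -> : mm = 'X^(mu.+1) * ((r1`_k)%:P * a + (r2`_k)%:P * b + (r3`_k)%:P * c).
    by rewrite /mm /u1 /u2 /u3 /ll1 /ll2 /ll3; ring.
  by rewrite mulf_neq0 // expf_neq0 // polyX_eq0.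
have hV1 : at_eps0 V1 = a by rewrite eV1 at0V.
have hV2 : at_eps0 V2 = b by rewrite eV2 at0V.
have hV3 : at_eps0 V3 = c by rewrite eV3 at0V.
have V30 : V3 != 0 by apply: contraNneq c0 => h0; rewrite -hV3 h0 /at_eps0 map_poly0.
have e0 : e != 0 by rewrite polyC_eq0 polyX_eq0.
have gF : gcd3_one (over_frac V1) (over_frac V2) (over_frac V3).
  rewrite /gcd3_one -size_poly_eq1; apply/negP => /negP hG1.
  set G := gcdp (gcdp (over_frac V1) (over_frac V2)) (over_frac V3) in hG1.
  have g1 : G %| over_frac V1 by apply: dvdp_trans (dvdp_gcdl _ _) (dvdp_gcdl _ _).
  have g2 : G %| over_frac V2 by apply: dvdp_trans (dvdp_gcdl _ _) (dvdp_gcdr _ _).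
  have g3 : G %| over_frac V3 by apply: dvdp_gcdr.
  have gm : G %| over_frac mm^:P.
    have : G %| over_frac (p1^:P * V1 + p2^:P * V2 + p3^:P * V3).
      by rewrite of_dot; apply: dvdp_add; [apply: dvdp_add|]; apply: dvdp_mull.
    rewrite kp /over_frac rmorphN /= dvdpNr rmorphM /= map_polyC /= mul_polyC dvdpZr //.
    by rewrite tofrac_eq0 polyX_eq0.
  have [z hz] := root_ex mm0 gm hG1.
  have z1 : root a z by apply: (rootV (w := w1)); rewrite -eV1; apply: root_dvdp g1 hz.
  have z2 : root b z by apply: (rootV (w := w2)); rewrite -eV2; apply: root_dvdp g2 hz.
  have z3 : root c z by apply: (rootV (w := w3)); rewrite -eV3; apply: root_dvdp g3 hz.
  move: hg; rewrite /gcd3_one -size_poly_eq1 => /eqP hg.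
  have : ('X - z%:P) %| gcdp (gcdp a b) c by rewrite !dvdp_gcd !dvdp_XsubCl z1 z2 z3.
  move/dvdp_leq; rewrite -size_poly_eq0 hg size_XsubC => /(_ isT).
  by [].
have sa0 := size_at0 V1; have sb0 := size_at0 V2; have sc0 := size_at0 V3.
rewrite hV1 in sa0; rewrite hV2 in sb0; rewrite hV3 in sc0.
have dVF : deg3 (over_frac V1) (over_frac V2) (over_frac V3) = n.
  apply/eqP; rewrite eqn_leq; apply/andP; split.
    by rewrite deg3_le !size_of sV1 sV2 sV3.
  apply: deg3_ge; rewrite !size_of.
  have : (0 < size c)%N by rewrite size_poly_gt0.
  move: hd sa0 sb0 sc0; rewrite /deg3.
  move: (size a) (size b) (size c) (size V1) (size V2) (size V3) => *; lia.
have hPF : syz (over_frac V1) (over_frac V2) (over_frac V3)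
              (over_frac P1) (over_frac P2) (over_frac P3).
  by rewrite /syz -of_dot sPV /over_frac rmorph0.
have hQF : syz (over_frac V1) (over_frac V2) (over_frac V3)
              (over_frac Q1) (over_frac Q2) (over_frac Q3).
  by rewrite /syz -of_dot sQV /over_frac rmorph0.
have cF : (cx (over_frac P2) (over_frac P3) (over_frac Q2) (over_frac Q3),
           cx (over_frac P3) (over_frac P1) (over_frac Q3) (over_frac Q1),
           cx (over_frac P1) (over_frac P2) (over_frac Q1) (over_frac Q2)) != (0, 0, 0).
  rewrite -!of_cx cPQ1 cPQ2 cPQ3; apply/negP => /eqP [_ _ /eqP].
  by rewrite of_eq0 mulf_eq0 (negPf e0) (negPf V30).
have dPF : (deg3 (over_frac P1) (over_frac P2) (over_frac P3) <= mu.+1)%N.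
  by rewrite deg3_le !size_of sP1 sP2 sP3.
have hk1 : (k.-1).+1 = k by rewrite /k; move: hn => *; lia.
have dQF : (deg3 (over_frac Q1) (over_frac Q2) (over_frac Q3) <= k.-1)%N.
  by rewrite deg3_le hk1 !size_of sQ1 sQ2 sQ3.
have lb : forall A B C, syz (over_frac V1) (over_frac V2) (over_frac V3) A B C ->
    (A, B, C) != (0, 0, 0) -> (mu.+1 <= deg3 A B C)%N.
  move=> A B C hs hn0; rewrite ltnNge; apply/negP => hle.
  have [c1|c1] := eqVneq (cx B C (over_frac Q2) (over_frac Q3),
           cx C A (over_frac Q3) (over_frac Q1),
           cx A B (over_frac Q1) (over_frac Q2)) (0, 0, 0); last first.
    have := L1 gF hs hQF c1; have := deg3_cross A B C (over_frac Q1) (over_frac Q2) (over_frac Q3).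
    rewrite dVF; move: hle dQF hn; rewrite /k.
    move: (deg3 A B C) (deg3 (over_frac Q1) (over_frac Q2) (over_frac Q3))
      (deg3 (cx B C (over_frac Q2) (over_frac Q3)) (cx C A (over_frac Q3) (over_frac Q1))
        (cx A B (over_frac Q1) (over_frac Q2))) => *; lia.
  have [c2|c2] := eqVneq (cx B C (over_frac P2) (over_frac P3),
           cx C A (over_frac P3) (over_frac P1),
           cx A B (over_frac P1) (over_frac P2)) (0, 0, 0); last first.
    have := L1 gF hs hPF c2; have := deg3_cross A B C (over_frac P1) (over_frac P2) (over_frac P3).
    rewrite dVF; move: hle dPF hn.
    move: (deg3 A B C) (deg3 (over_frac P1) (over_frac P2) (over_frac P3))
      (deg3 (cx B C (over_frac P2) (over_frac P3)) (cx C A (over_frac P3) (over_frac P1))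
        (cx A B (over_frac P1) (over_frac P2))) => *; lia.
  by move: cF; rewrite (par hn0 c2 c1) eqxx.
split => //; last by rewrite hV1 hV2 hV3.
split; last exact: lb.
have hPn : (over_frac P1, over_frac P2, over_frac P3) != (0, 0, 0).
  apply: contraNneq cF => -[e1 e2 e3]; by rewrite e1 e2 e3 /cx !mul0r subrr.
exists (over_frac P1), (over_frac P2), (over_frac P3); split => //.
split => //; by apply/eqP; rewrite eqn_leq dPF (lb _ _ _ hPF hPn).
Qed.
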